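(* Let $W$ be a finite set and let $\preceq_1$ and $\preceq_2$ be total preorders on $W$. Then there is exactly one binary relation $\preceq_3$ on $W$ satisfying (RE1)–(RE3) with respect to $\preceq_1,\preceq_2$; consequently there is a unique revision operator $\circ$ (mapping pairs of total preorders to a relation $\preceq_1\circ\preceq_2=\preceq_3$) satisfying (RE1)–(RE3).
   Context: A total preorder on $W$ is a reflexive, transitive relation under which any two elements are comparable. For a preorder $\preceq_i$ write $\omega\prec_i\omega'$ iff $\omega\preceq_i\omega'$ and not $\omega'\preceq_i\omega$, and $\omega\sim_i\omega'$ iff $\omega\preceq_i\omega'$ and $\omega'\preceq_i\omega$; $\prec_i$ denotes the strict part $\{(x,y)\mid x\prec_i y\}$. The postulates for $\preceq_3=\preceq_1\circ\preceq_2$ are: (RE1) $\preceq_3$ is a total preorder; (RE2) $\prec_2\subseteq\prec_3$; (RE3) if $\omega\sim_2\omega'$, then $\omega\prec_3\omega'$ iff $\omega\prec_1\omega'$. *)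

(* Defs.v *)
From mathcomp Require Import all_boot.
Set Implicit Arguments. Unset Strict Implicit. Unset Printing Implicit Defensive.

Definition total_preorder (W : finType) (le : rel W) : Prop :=
  reflexive le /\ transitive le /\ (forall x y, le x y || le y x).

Definition strict (W : finType) (le : rel W) : rel W := fun x y => le x y && ~~ le y x.
Definition indiff (W : finType) (le : rel W) : rel W := fun x y => le x y && le y x.

Definition RE (W : finType) (le1 le2 le3 : rel W) : Prop :=
  total_preorder le3 /\
  (forall x y, strict le2 x y -> strict le3 x y) /\
  (forall x y, indiff le2 x y -> (strict le3 x y <-> strict le1 x y)).

(* Main.v *)
Require Import Defs.
From mathcomp Require Import all_boot.

Definition lex (W : finType) (le1 le2 : rel W) : rel W :=
  fun x y => strict le2 x y || (indiff le2 x y && le1 x y).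
Arguments lex {W}.

Lemma lex_tp (W : finType) (le1 le2 : rel W) :
  total_preorder le1 -> total_preorder le2 -> total_preorder (lex le1 le2).
Proof.
move=> [r1 [t1 c1]] [r2 [t2 c2]]; rewrite /lex /strict /indiff.
split; first by move=> x; rewrite !r2 r1.
split; last first.
  move=> x y; have := c1 x y; have := c2 x y.
  by case: (le2 x y); case: (le2 y x); case: (le1 x y); case: (le1 y x).
move=> y x z.
have a1 := t1 y x z; have a2 := t1 x z y; have a3 := t1 z y x;
have a4 := t1 x y z; have a5 := t1 y z x; have a6 := t1 z x y.
have b1 := t2 y x z; have b2 := t2 x z y; have b3 := t2 z y x;
have b4 := t2 x y z; have b5 := t2 y z x; have b6 := t2 z x y.
move: a1 a2 a3 a4 a5 a6 b1 b2 b3 b4 b5 b6.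
case: (le1 x y); case: (le1 y x); case: (le1 x z); case: (le1 z x);
case: (le1 y z); case: (le1 z y);
case: (le2 x y); case: (le2 y x); case: (le2 x z); case: (le2 z x);
case: (le2 y z); case: (le2 z y) => //=; by do 12 (move=> H; try by move: (H isT isT)).
Qed.

Lemma lex_RE (W : finType) (le1 le2 : rel W) :
  total_preorder le1 -> total_preorder le2 -> RE le1 le2 (lex le1 le2).
Proof.
move=> h1 h2; split; first exact: lex_tp.
rewrite /lex /strict /indiff; split.
  by move=> x y; case: (le2 x y); case: (le2 y x).
move=> x y; case: (le2 x y); case: (le2 y x) => //= _; tauto.
Qed.

Lemma lex_uniq (W : finType) (le1 le2 le3 : rel W) :
  total_preorder le1 -> total_preorder le2 -> RE le1 le2 le3 ->
  le3 =2 lex le1 le2.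
Proof.
move=> [r1 [t1 c1]] [r2 [t2 c2]] [[r3 [t3 c3]] [H2 H3]] x y.
have := H2 x y; have := H2 y x; have := H3 x y; have := H3 y x.
have := c1 x y; have := c2 x y; have := c3 x y.
rewrite /lex /strict /indiff.
case: (le2 x y); case: (le2 y x); case: (le1 x y); case: (le1 y x);
case: (le3 x y); case: (le3 y x) => //=; intuition.
Qed.

Theorem theorem3 (W : finType) :
  (forall le1 le2 : rel W, total_preorder le1 -> total_preorder le2 ->
     exists le3 : rel W, RE le1 le2 le3 /\
       forall le3' : rel W, RE le1 le2 le3' -> le3' =2 le3) /\
  (exists op : rel W -> rel W -> rel W,
     (forall le1 le2, total_preorder le1 -> total_preorder le2 ->
        RE le1 le2 (op le1 le2)) /\
     forall op' : rel W -> rel W -> rel W,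
       (forall le1 le2, total_preorder le1 -> total_preorder le2 ->
          RE le1 le2 (op' le1 le2)) ->
       forall le1 le2, total_preorder le1 -> total_preorder le2 ->
         op' le1 le2 =2 op le1 le2).
Proof.
split.
  move=> le1 le2 h1 h2; exists (lex le1 le2); split; first exact: lex_RE.
  by move=> le3 h3; apply: lex_uniq.
exists (@lex W); split; first exact: lex_RE.
move=> op' h le1 le2 h1 h2; apply: lex_uniq => //; exact: h.
Qed.
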